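(* Let $n,x$ be integers with $1<x<n$, so that $G=C_{2n}(x,1,n)$ is a $5$-regular circulant graph. If $n\equiv x\equiv 0\pmod 3$ and $\tfrac{n}{2}\leq x\leq n$, then $G$ is word-representable.
   Context: Two distinct letters $x,y$ alternate in a word $w$ if, after deleting all other letters from $w$, the resulting word is of the form $xyxy\cdots$ or $yxyx\cdots$ (of even or odd length). A graph $G=(V,E)$ is word-representable if there is a word $w$ over the alphabet $V$, containing every letter of $V$ at least once, such that for all distinct $x,y\in V$, $xy\in E$ if and only if $x$ and $y$ alternate in $w$. For an integer $m$ and a set $R$ of positive integers each at most $m/2$, the circulant graph $C_m(R)$ has vertex set $\{0,1,\dots,m-1\}$, with $i$ and $j$ adjacent iff $\min(|i-j|,\,m-|i-j|)\in R$. $C_{2n}(x,1,n)$ denotes the circulant graph on $2n$ vertices with jump set $\{1,x,n\}$; it is $5$-regular exactly when $1<x<n$. *)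

(* Defs.v *)
From mathcomp Require Import all_boot.
Set Implicit Arguments. Unset Strict Implicit. Unset Printing Implicit Defensive.

Definition alt_word (T : Type) (x y : T) (k : nat) : seq T :=
  [seq (if odd i then y else x) | i <- iota 0 k].

Definition alternate (T : eqType) (x y : T) (w : seq T) : Prop :=
  let s := [seq z <- w | (z == x) || (z == y)] in
  s = alt_word x y (size s) \/ s = alt_word y x (size s).

Definition word_representable (V : finType) (E : rel V) : Prop :=
  exists w : seq V, (forall v : V, v \in w) /\
    (forall a b : V, a != b -> (E a b <-> alternate a b w)).

Definition circ_dist (m : nat) (i j : 'I_m) : nat :=
  let d := maxn i j - minn i j in minn d (m - d).

Definition circulant (m : nat) (R : seq nat) : rel 'I_m :=
  fun i j => circ_dist i j \in R.
Arguments circulant m R : clear implicits.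

(* Main.v *)
Require Import Defs.
From mathcomp Require Import all_boot.
Require Import Defs.
From mathcomp Require Import all_boot zify.
Set Implicit Arguments. Unset Strict Implicit. Unset Printing Implicit Defensive.

Lemma alt_word_cat4 (T : Type) (a b : T) k :
  alt_word a b (4 + k) = [:: a; b; a; b] ++ alt_word a b k.
Proof.
rewrite /alt_word iotaD map_cat /=.
have -> : iota 4 k = map (addn 4) (iota 0 k) by rewrite -iotaDl.
rewrite -map_comp /=; do 4 f_equal.
by apply: eq_map => i /=; rewrite add0n !negbK.
Qed.

Lemma alt_flat (T : eqType) (a b : T) (bs : seq (seq T)) :
  all (fun t => size t == 4) bs ->
  (flatten bs == alt_word a b (size (flatten bs))) = all (fun t => t == [:: a; b; a; b]) bs.
Proof.
elim: bs => [|t bs IH] //= /andP[/eqP st hs].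
rewrite size_cat st alt_word_cat4 eqseq_cat; last by rewrite st.
by rewrite IH.
Qed.

Lemma alternate_sym (T : eqType) (a b : T) w : alternate a b w <-> alternate b a w.
Proof.
rewrite /alternate.
have -> : [seq z <- w | (z == a) || (z == b)] = [seq z <- w | (z == b) || (z == a)].
  by apply: eq_filter => z; rewrite orbC.
by split; case=> h; [right|left|right|left].
Qed.

Lemma alt_blocks (T : eqType) (a b : T) (segs : seq (seq T)) :
  all (fun s => size [seq z <- s | (z == a) || (z == b)] == 4) segs ->
  alternate a b (flatten segs) <->
  (all (fun s => [seq z <- s | (z == a) || (z == b)] == [:: a; b; a; b]) segs \/
   all (fun s => [seq z <- s | (z == a) || (z == b)] == [:: b; a; b; a]) segs).
Proof.
move=> hs; rewrite /alternate filter_flatten.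
have hs' : all (fun t => size t == 4) [seq [seq z <- s | (z == a) || (z == b)] | s <- segs].
  by rewrite all_map.
have E1 := alt_flat a b hs'. have E2 := alt_flat b a hs'.
rewrite !all_map in E1 E2.
split=> [[h|h]|[h|h]].
- by left; move/eqP: h; rewrite E1.
- by right; move/eqP: h; rewrite E2.
- by left; apply/eqP; rewrite E1.
- by right; apply/eqP; rewrite E2.
Qed.

Lemma filter_comm (T : Type) (p q : pred T) (s : seq T) :
  [seq z <- [seq z <- s | p z] | q z] = [seq z <- [seq z <- s | q z] | p z].
Proof. by rewrite -!filter_predI; apply: eq_filter => z /=; rewrite andbC. Qed.

Section Gen.
Variable m : nat.
Variable E : rel 'I_m.
Variable L : 'I_m -> nat.
Hypothesis Esym : forall u v, E u v = E v u.
Hypothesis Eprop : forall u v, E u v -> L u != L v.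
Hypothesis Lb : forall v, L v < 4.
Definition Or : rel 'I_m := fun u v => E u v && (L u < L v).
Hypothesis P4 : forall v0 v1 v2 v3, Or v0 v1 -> Or v1 v2 -> Or v2 v3 -> E v0 v3 ->
  E v0 v2 && E v1 v3.

Definition key (v : 'I_m) := L v * m + v.
Definition leK : rel 'I_m := fun u v => key u <= key v.
Definition Pl := sort leK (enum 'I_m).

Lemma key_inj : injective key.
Proof.
move=> u v e; apply: val_inj => /=.
have hu : key u %% m = u by rewrite /key modnMDl modn_small.
have hv : key v %% m = v by rewrite /key modnMDl modn_small.
by rewrite -hu -hv e.
Qed.
Lemma leK_total : total leK. Proof. by move=> u v; apply: leq_total. Qed.
Lemma leK_trans : transitive leK. Proof. by move=> u v w; apply: leq_trans. Qed.
Lemma leK_anti : antisymmetric leK.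
Proof. by move=> u v /anti_leq /key_inj. Qed.

Lemma filter2 (a b : 'I_m) : a != b -> key a < key b ->
  [seq z <- Pl | (z == a) || (z == b)] = [:: a; b].
Proof.
move=> ab kab; rewrite /Pl filter_sort; [|exact: leK_total|exact: leK_trans].
have -> : sort leK [seq z <- enum 'I_m | (z == a) || (z == b)] = sort leK [:: a; b].
  apply/(perm_sortP leK_total leK_trans leK_anti).
  apply: uniq_perm; first by rewrite filter_uniq // enum_uniq.
    by rewrite /= inE ab.
  by move=> z; rewrite mem_filter mem_enum !inE andbT.
by apply: (sorted_sort leK_trans); rewrite /= /leK ltnW.
Qed.

Definition seg (X Z : pred 'I_m) :=
  [seq v <- Pl | Z v] ++ [seq v <- Pl | X v] ++ [seq v <- Pl | ~~ Z v] ++ [seq v <- Pl | ~~ X v].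
Definition blk (X Z : pred 'I_m) (a b : 'I_m) :=
  [seq z <- [:: a; b] | Z z] ++ [seq z <- [:: a; b] | X z] ++
  [seq z <- [:: a; b] | ~~ Z z] ++ [seq z <- [:: a; b] | ~~ X z].

Lemma seg_filter (X Z : pred 'I_m) (a b : 'I_m) : a != b -> key a < key b ->
  [seq z <- seg X Z | (z == a) || (z == b)] = blk X Z a b.
Proof.
move=> ab kab; rewrite /seg /blk !filter_cat.
by rewrite (filter_comm _ (fun z => (z == a) || (z == b))) !(filter_comm _ (fun z => (z == a) || (z == b))) filter2.
Qed.

Definition valid (X Z : pred 'I_m) :=
  [/\ (forall u v, Or u v -> X v -> X u), (forall u v, Or u v -> Z v -> Z u),
      (forall u, X u -> Z u) & (forall u v, X u -> Or u v -> Z v)].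

Lemma blk_size (X Z : pred 'I_m) (a b : 'I_m) : size (blk X Z a b) = 4.
Proof. by rewrite /blk /=; case: (X a); case: (X b); case: (Z a); case: (Z b). Qed.

Lemma blk_edge (X Z : pred 'I_m) (a b : 'I_m) : valid X Z -> Or a b -> blk X Z a b = [:: a; b; a; b].
Proof.
case=> dX dZ XZ NZ oab.
have H1 : X b ==> X a by apply/implyP => /(dX _ _ oab).
have H2 : Z b ==> Z a by apply/implyP => /(dZ _ _ oab).
have H3 : X a ==> Z a by apply/implyP => /XZ.
have H4 : X b ==> Z b by apply/implyP => /XZ.
have H5 : X a ==> Z b by apply/implyP => /NZ; apply.
move: H1 H2 H3 H4 H5; rewrite /blk /=.
by case: (X a); case: (X b); case: (Z a); case: (Z b).
Qed.

Lemma blk_break1 (X Z : pred 'I_m) (a b : 'I_m) : (forall u, X u -> Z u) -> X a -> ~~ Z b ->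
  blk X Z a b = [:: a; a; b; b].
Proof.
move=> XZ xa zb.
have za := XZ a xa.
have xb : X b = false by apply/negP => /XZ; apply/negP.
by rewrite /blk /= xa xb za (negbTE zb).
Qed.

Lemma blk_break2 (X Z : pred 'I_m) (a b : 'I_m) : (forall u, X u -> Z u) -> Z b -> ~~ Z a ->
  (blk X Z a b = [:: b; b; a; a]) \/ (blk X Z a b = [:: b; a; a; b]).
Proof.
move=> XZ zb za.
have xa : X a = false by apply/negP => /XZ; apply/negP.
rewrite /blk /= xa zb (negbTE za) /=.
by case: (X b); [left|right].
Qed.

Lemma conn_le u v : connect Or u v -> L u <= L v /\ (u != v -> L u < L v).
Proof.
case/connectP => p pth ->; elim: p u pth => [|w p IH] u /=; first by rewrite eqxx.
case/andP => /andP[_ luw] pth; have [h1 _] := IH w pth.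
split; first exact: ltnW (leq_trans luw h1).
by move=> _; exact: leq_trans luw h1.
Qed.

Lemma conn_first u v : connect Or u v -> u != v -> exists2 w, Or u w & connect Or w v.
Proof.
case/connectP => [[|w p]] /= pth ->; first by rewrite eqxx.
move=> _; case/andP: pth => ouw pth; exists w => //.
by apply/connectP; exists p.
Qed.

Definition X1 (a : 'I_m) : pred 'I_m := fun u => connect Or u a.
Definition Z1 (a : 'I_m) : pred 'I_m := fun u =>
  [exists y, connect Or u y && [exists z, connect Or z a && ((z == y) || Or z y)]].
Definition Z2 (c : 'I_m) : pred 'I_m := fun u => connect Or u c.

Lemma valid1 a : valid (X1 a) (Z1 a).
Proof.
split.
- by move=> u v ouv; rewrite /X1 => hv; apply: connect_trans (connect1 ouv) hv.
- move=> u v ouv; rewrite /Z1 => /existsP[y /andP[vy hy]].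
  by apply/existsP; exists y; rewrite (connect_trans (connect1 ouv) vy).
- move=> u xu; apply/existsP; exists u; rewrite connect0 /=.
  by apply/existsP; exists u; apply/andP; split; [exact: xu | rewrite eqxx].
- move=> u v xu ouv; apply/existsP; exists v; rewrite connect0 /=.
  by apply/existsP; exists u; apply/andP; split; [exact: xu | rewrite ouv orbT].
Qed.

Lemma valid2 c : valid pred0 (Z2 c).
Proof.
split => //.
by move=> u v ouv; rewrite /Z2 => hv; apply: connect_trans (connect1 ouv) hv.
Qed.

Lemma OrE u v : Or u v -> E u v. Proof. by case/andP. Qed.
Lemma OrL u v : Or u v -> L u < L v. Proof. by case/andP. Qed.

Lemma step1 u v : connect Or u v -> u != v -> L v = (L u).+1 -> Or u v.
Proof.
move=> c uv e; have [w ouw cwv] := conn_first c uv.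
case: (eqVneq w v) => [<- //|wv].
have [_ h] := conn_le cwv; have := h wv; have := OrL ouw; clear -e; lia.
Qed.

Lemma noP a c : a != c -> ~~ E a c -> connect Or a c -> Z1 a c -> False.
Proof.
move=> ac nac cac /existsP[y /andP[cy /existsP[z /andP[cza hzy]]]].
have [b oab cbc] := conn_first cac ac.
have bc : b != c by apply: contraNneq nac => eb; rewrite -eb; exact: OrE oab.
have [_ lbc] := conn_le cbc; have {}lbc := lbc bc.
have lab := OrL oab.
have [lcy lcy'] := conn_le cy.
have [lza lza'] := conn_le cza.
case/orP: hzy => [/eqP ezy|ozy].
  by subst z; clear -lza lcy lab lbc; lia.
have lzy := OrL ozy.
case: (eqVneq z a) => [eza|nza].
  subst z; case: (eqVneq y c) => [eyc|nyc].
    by subst y; move: nac; rewrite (OrE ozy).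
  have lcy2 : L c < L y by apply: lcy'; rewrite eq_sym.
  have ha := Lb a; have hy := Lb y.
  have obc : Or b c by apply: step1 => //; clear -lab lbc lcy2 ha hy; lia.
  have ocy : Or c y.
    apply: step1 => //; first by rewrite eq_sym.
    by clear -lab lbc lcy2 ha hy; lia.
  by case/andP: (P4 oab obc ocy (OrE ozy)) => h _; move: nac; rewrite h.
have lza2 := lza' nza.
have ha := Lb a; have hy := Lb y; have hc := Lb c.
have eyc : y = c.
  apply/eqP; apply/negPn/negP => nyc.
  have : L c < L y by apply: lcy'; rewrite eq_sym.
  by clear -lza2 lab lbc hy; lia.
subst y.
have oza : Or z a by apply: step1 => //; clear -lza2 lab lbc hc; lia.
have obc : Or b c by apply: step1 => //; clear -lza2 lab lbc hc; lia.
by case/andP: (P4 oza oab obc (OrE ozy)) => _ h; move: nac; rewrite h.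
Qed.

Definition segac (a c : 'I_m) := if Z1 a c then seg pred0 (Z2 c) else seg (X1 a) (Z1 a).
Definition segs := [seq segac a c | a <- enum 'I_m, c <- enum 'I_m].
Definition wrd := flatten segs.

Lemma segac_valid a c : exists X, exists Z, valid X Z /\ segac a c = seg X Z.
Proof.
rewrite /segac; case: ifP => _.
  by exists pred0, (Z2 c); split => //; exact: valid2.
by exists (X1 a), (Z1 a); split => //; exact: valid1.
Qed.

Lemma keyL u v : L u < L v -> key u < key v.
Proof.
move=> h; rewrite /key.
have hu := ltn_ord u.
have : (L u).+1 * m <= L v * m by rewrite leq_mul2r h orbT.
rewrite mulSn; lia.
Qed.

Lemma mainpair a b : a != b -> key a < key b -> (E a b <-> alternate a b wrd).
Proof.
move=> ab kab.
have sizes : all (fun s => size [seq z <- s | (z == a) || (z == b)] == 4) segs.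
  apply/allP => s /allpairsP[[x y] [_ _ ->]] /=.
  have [X [Z [_ ->]]] := segac_valid x y.
  by rewrite seg_filter // blk_size.
rewrite /wrd (alt_blocks sizes).
split.
- move=> eab; left; apply/allP => s /allpairsP[[x y] [_ _ ->]] /=.
  have [X [Z [vXZ ->]]] := segac_valid x y.
  rewrite seg_filter // blk_edge //.
  rewrite /Or eab /=.
  have := Eprop eab; case: (ltngtP (L a) (L b)) => // h _.
  by move: (keyL h); rewrite ltnNge (ltnW kab).
- move=> halt; apply/negPn/negP => nab.
  have hin : segac a b \in segs by apply: allpairs_f; rewrite mem_enum.
  have ba : b != a by rewrite eq_sym.
  have ht : [\/ [seq z <- segac a b | (z == a) || (z == b)] = [:: b; b; a; a],
               [seq z <- segac a b | (z == a) || (z == b)] = [:: b; a; a; b] |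
               [seq z <- segac a b | (z == a) || (z == b)] = [:: a; a; b; b]].
    rewrite /segac; case: ifP => hz; rewrite seg_filter //.
      have nz : ~~ Z2 b a.
        by apply/negP => cab; apply: (noP ab nab cab hz).
      have XZ0 : forall u, (pred0 : pred 'I_m) u -> Z2 b u by [].
      have zb : Z2 b b by exact: connect0.
      by have [->|->] := blk_break2 XZ0 zb nz; [constructor 1 | constructor 2].
    have [_ _ XZ _] := valid1 a.
    have xa : X1 a a by exact: connect0.
    by rewrite (blk_break1 XZ xa (negbT hz)); constructor 3.
  case: halt => /allP H; move: (H _ hin) => /= /eqP h; case: ht; rewrite h => /eqP;
    by rewrite !eqseq_cons (negbTE ab) (negbTE ba) ?andbF ?andFb.
Qed.

Lemma wr_levels : word_representable E.
Proof.
exists wrd; split.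
- move=> v; rewrite /wrd /segs; apply/flattenP; exists (segac v v).
    by apply: allpairs_f; rewrite mem_enum.
  have [X [Z [_ ->]]] := segac_valid v v.
  have hv : v \in Pl by rewrite /Pl mem_sort mem_enum.
  by rewrite /seg !mem_cat !mem_filter hv /=; case: (Z v); rewrite ?orbT.
- move=> a b ab; case: (ltngtP (key a) (key b)) => [lt|gt|eq].
  + exact: mainpair.
  + rewrite Esym alternate_sym; apply: mainpair => //; by rewrite eq_sym.
  + by move: ab; rewrite (key_inj eq) eqxx.
Qed.
End Gen.


Section Conc.
Variables n x N X : nat.
Hypotheses (h1 : 1 < x) (h2 : x < n) (h3 : n = 3 * N) (h4 : x = 3 * X) (h5 : n <= 2 * x).

Definition adjn (u v : nat) : bool :=
  (let d := maxn u v - minn u v in minn d (2 * n - d)) \in [:: 1; x; n].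
Definition adjc (u v : nat) : bool :=
  [|| v == u.+1, u == v.+1, (u == 2 * n - 1) && (v == 0), (v == 2 * n - 1) && (u == 0),
      v == u + x, u == v + x, v + 2 * n == u + x, u + 2 * n == v + x, v == u + n | u == v + n].

Ltac pick := rewrite /adjc; repeat (first [ apply/orP; left; (apply/eqP; lia) | apply/orP; left; (apply/andP; split; apply/eqP; lia) | apply/orP; right ]); try (apply/eqP; lia).

Lemma adj_cases u v : u < 2 * n -> v < 2 * n -> adjn u v -> adjc u v.
Proof.
move=> hu hv; rewrite /adjn /= !inE.
case: (leqP u v) => huv; set d := (_ - _); case: (leqP d (2 * n - d)) => hd; rewrite /d;
 case/or3P => /eqP e; pick.
Qed.

Lemma adjc_adjn u v : u < 2 * n -> v < 2 * n -> adjc u v -> adjn u v.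
Proof. rewrite /adjn /adjc !inE => hu hv; lia. Qed.

Definition tr (i : nat) : nat := (x <= i) + (n <= i) + (n + x <= i).
Definition Lv (i : nat) : nat := (i %% 3 + tr i) %% 4.
Definition D (u v : nat) := (Lv v + 4 - Lv u) %% 4.

Lemma tr_le i : tr i <= 3. Proof. rewrite /tr; lia. Qed.
Lemma m3 i : i %% 3 < 3. Proof. by rewrite ltn_pmod. Qed.
Lemma Lv_lt i : Lv i < 4. Proof. by rewrite /Lv ltn_pmod. Qed.

Lemma D1 u : u.+1 < 2 * n -> u %% 3 != 2 -> D u u.+1 = 1.
Proof.
move=> hu hr; have e : tr u.+1 = tr u by rewrite /tr; lia.
have r : u.+1 %% 3 = (u %% 3).+1 by lia.
rewrite /D /Lv e r. move: hr (tr_le u) (m3 u). move: (tr u) (u %% 3) => a b. lia.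
Qed.
Lemma D1' u : u.+1 < 2 * n -> u %% 3 = 2 -> (D u u.+1 == 2) || (D u u.+1 == 3).
Proof.
move=> hu hr; have e : (tr u.+1 == tr u) || (tr u.+1 == (tr u).+1) by rewrite /tr; lia.
have r : u.+1 %% 3 = 0 by lia.
rewrite /D /Lv r hr. move: e (tr_le u) (tr_le u.+1). move: (tr u) (tr u.+1) => a b. lia.
Qed.
Lemma Dw : D (2 * n - 1) 0 = 3.
Proof.
have e : tr (2 * n - 1) = 3 by rewrite /tr; lia.
have e0 : tr 0 = 0 by rewrite /tr; lia.
have r : (2 * n - 1) %% 3 = 2 by lia.
by rewrite /D /Lv e e0 r.
Qed.
Lemma Dx u : u + x < 2 * n -> (D u (u + x) == 1) || (D u (u + x) == 2).
Proof.
move=> hu; have e : (tr (u + x) == (tr u).+1) || (tr (u+x) == (tr u).+2) by rewrite /tr; lia.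
have r : (u + x) %% 3 = u %% 3 by lia.
rewrite /D /Lv r. move: e (tr_le u) (tr_le (u + x)) (m3 u). move: (tr u) (tr (u + x)) (u %% 3) => a b c. lia.
Qed.
Lemma Dxw u v : u < 2 * n -> v + 2 * n = u + x -> (D u v == 1) || (D u v == 2).
Proof.
move=> hu hv; have e : (tr u == (tr v) + 2) || (tr u == (tr v) + 3) by rewrite /tr; lia.
have r : v %% 3 = u %% 3 by lia.
rewrite /D /Lv r. move: e (tr_le u) (tr_le v) (m3 u). move: (tr u) (tr v) (u %% 3) => a b c. lia.
Qed.
Lemma Dn u : u < n -> D u (u + n) = 2.
Proof.
move=> hu; have e : tr (u + n) = (tr u) + 2 by rewrite /tr; lia.
have r : (u + n) %% 3 = u %% 3 by lia.
rewrite /D /Lv r e. move: (tr_le u) (m3 u). move: (tr u) (u %% 3) => a c. lia.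
Qed.

Lemma Dne u v : D u v != 0 -> Lv u != Lv v.
Proof. rewrite /D; move: (Lv_lt u) (Lv_lt v); move: (Lv u) (Lv v) => a b; lia. Qed.
Lemma Dne' u v : D v u != 0 -> Lv u != Lv v.
Proof. rewrite /D; move: (Lv_lt u) (Lv_lt v); move: (Lv u) (Lv v) => a b; lia. Qed.
Lemma Dup u v : Lv v = (Lv u).+1 -> (D u v = 1) /\ (D v u = 3).
Proof. rewrite /D; move: (Lv_lt u) (Lv_lt v); move: (Lv u) (Lv v) => a b; lia. Qed.

Lemma proper u v : u < 2 * n -> v < 2 * n -> adjc u v -> Lv u != Lv v.
Proof.
move=> hu hv; rewrite /adjc.
case/orP=> [/eqP e|]; first (subst v; case: (eqVneq (u %% 3) 2) => r;
   [apply: Dne; have := D1' hv r; lia | apply: Dne; rewrite D1 //]).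
case/orP=> [/eqP e|]; first (subst u; case: (eqVneq (v %% 3) 2) => r;
   [apply: Dne'; have := D1' hu r; lia | apply: Dne'; rewrite D1 //]).
case/orP=> [/andP[/eqP e1 /eqP e2]|]; first (subst u v; apply: Dne; rewrite Dw //).
case/orP=> [/andP[/eqP e1 /eqP e2]|]; first (subst u v; apply: Dne'; rewrite Dw //).
case/orP=> [/eqP e|]; first (subst v; apply: Dne; have := Dx hv; lia).
case/orP=> [/eqP e|]; first (subst u; apply: Dne'; have := Dx hu; lia).
case/orP=> [/eqP e|]; first (apply: Dne; have := Dxw hu e; lia).
case/orP=> [/eqP e|]; first (apply: Dne'; have := Dxw hv e; lia).
case/orP=> [/eqP e|/eqP e].
- subst v; apply: Dne; rewrite Dn //; lia.
- subst u; apply: Dne'; rewrite Dn //; lia.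
Qed.

Definition stpA (u v : nat) : bool := (v == u.+1) && (u %% 3 != 2).
Definition stpB (u v : nat) : bool := (u %% 3 == 0) && ((v.+1 == u) || ((u == 0) && (v == 2 * n - 1))).
Definition stpC (u v : nat) : bool := (v == u + x) || (v + 2 * n == u + x).
Definition stp u v := [|| stpA u v, stpB u v | stpC u v].

Lemma step u v : u < 2 * n -> v < 2 * n -> adjc u v -> Lv v = (Lv u).+1 -> stp u v.
Proof.
move=> hu hv a /Dup [d1 d2]; move: a; rewrite /adjc /stp /stpA /stpB /stpC.
case/orP=> [/eqP e|]; first (subst v; case: (eqVneq (u %% 3) 2) => r;
   [have := D1' hv r; lia | by rewrite eqxx]).
case/orP=> [/eqP e|]; first (subst u; case: (eqVneq (v %% 3) 2) => r;
   [apply/orP; right; apply/orP; left; apply/andP; split; [lia|by rewrite eqxx] | move: d2; rewrite D1 //]).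
case/orP=> [/andP[/eqP e1 /eqP e2]|]; first (subst u v; move: d1; rewrite Dw //).
case/orP=> [/andP[/eqP e1 /eqP e2]|]; first (subst u v; apply/orP; right; apply/orP; left; apply/andP; split; [by [] | by rewrite !eqxx orbT]).
case/orP=> [/eqP e|]; first (by rewrite e eqxx !orbT).
case/orP=> [/eqP e|]; first (subst u; have := Dx hu; lia).
case/orP=> [/eqP e|]; first (by rewrite e eqxx !orbT).
case/orP=> [/eqP e|]; first (have := Dxw hv e; lia).
case/orP=> [/eqP e|/eqP e].
- subst v; move: d1; rewrite Dn //; lia.
- subst u; move: d2; rewrite Dn //; lia.
Qed.

Lemma resA {u v : nat} : stpA u v -> (u %% 3 < 2) && (v %% 3 == (u %% 3).+1).
Proof. rewrite /stpA => h; lia. Qed.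
Lemma resB {u v : nat} : stpB u v -> u < 2 * n -> v < 2 * n -> (u %% 3 == 0) && (v %% 3 == 2).
Proof. rewrite /stpB => ? ? ?; lia. Qed.
Lemma resC {u v : nat} : stpC u v -> u < 2 * n -> v < 2 * n -> v %% 3 == u %% 3.
Proof. rewrite /stpC => ? ? ?; lia. Qed.
Lemma arA {u v : nat} : stpA u v -> v = u.+1.
Proof. rewrite /stpA => h; lia. Qed.
Lemma arB {u v : nat} : stpB u v -> (v.+1 = u) \/ (u = 0 /\ v = 2 * n - 1).
Proof. rewrite /stpB => h; lia. Qed.
Lemma arC {u v : nat} : stpC u v -> (v = u + x) \/ (v + 2 * n = u + x).
Proof. rewrite /stpC => h; lia. Qed.

Ltac res H := first [move: (resA H) | move: (resB H) | move: (resC H)].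
Ltac ar H := first [move: (arA H) | move: (arB H) | move: (arC H)].

Lemma path4 v0 v1 v2 v3 :
  v0 < 2 * n -> v1 < 2 * n -> v2 < 2 * n -> v3 < 2 * n ->
  stp v0 v1 -> stp v1 v2 -> stp v2 v3 -> adjc v0 v3 ->
  adjc v0 v2 && adjc v1 v3.
Proof.
move=> b0 b1 b2 b3.
rewrite /stp => /or3P[s1|s1|s1] /or3P[s2|s2|s2] /or3P[s3|s3|s3] a03;
 (first [ (exfalso; res s1; try (move=> /(_ b0 b1)); res s2; try (move=> /(_ b1 b2)); res s3; try (move=> /(_ b2 b3));
           move: (v0 %% 3) (v1 %% 3) (v2 %% 3) (v3 %% 3) => r0 r1 r2 r3; clear -r0; lia)
        | (exfalso; ar s1; ar s2; ar s3; move: a03; clear s1 s2 s3; rewrite /adjc; lia)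
        | idtac ]).
move: (arC s1) (arC s2) (arC s3) => e1 e2 e3.
have hn : n = 2 * x by move: a03; rewrite /adjc; lia.
have e02 : (v2 == v0 + n) || (v0 == v2 + n) by lia.
have e13 : (v3 == v1 + n) || (v1 == v3 + n) by lia.
rewrite /adjc; case/orP: e02 => ->; case/orP: e13 => ->; by rewrite !orbT.
Qed.
End Conc.

Theorem corollary3 (n x : nat) :
  1 < x -> x < n ->
  n %% 3 = 0 -> x %% 3 = 0 ->
  n <= 2 * x -> x <= n ->
  word_representable (circulant (2 * n) [:: 1; x; n]).
Proof.
move=> h1 h2 h3 h4 h5 _.
have [N hN] : exists N, n = 3 * N by exists (n %/ 3); lia.
have [X hX] : exists X, x = 3 * X by exists (x %/ 3); lia.
have Ead : forall u v : 'I_(2 * n), circulant (2 * n) [:: 1; x; n] u v = adjn n x u v by [].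
apply: (@wr_levels _ _ (fun v : 'I_(2 * n) => Lv n x v)).
- by move=> u v; rewrite !Ead; unfold adjn; rewrite (maxnC (val u)) (minnC (val u)).
- move=> u v; rewrite Ead => e.
  have hu := ltn_ord u; have hv := ltn_ord v.
  by apply: (proper (N:=N) (X:=X)) => //; apply: (adj_cases (N:=N) (X:=X)).
- by move=> v; apply: Lv_lt.
- move=> v0 v1 v2 v3 o01 o12 o23 e03.
  move: (o01) (o12) (o23) => /andP[a01 l01] /andP[a12 l12] /andP[a23 l23].
  have b3 := Lv_lt n x v3.
  have w0 := ltn_ord v0; have w1 := ltn_ord v1; have w2 := ltn_ord v2; have w3 := ltn_ord v3.
  have s01 : stp n x v0 v1.
    apply: (step (N:=N) (X:=X)) => //; [apply: (adj_cases (N:=N) (X:=X)) => // | lia].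
  have s12 : stp n x v1 v2.
    apply: (step (N:=N) (X:=X)) => //; [apply: (adj_cases (N:=N) (X:=X)) => // | lia].
  have s23 : stp n x v2 v3.
    apply: (step (N:=N) (X:=X)) => //; [apply: (adj_cases (N:=N) (X:=X)) => // | lia].
  have c03 : adjc n x v0 v3 by apply: (adj_cases (N:=N) (X:=X)).
  have := path4 h1 h2 hN hX h5 (ltn_ord v0) (ltn_ord v1) (ltn_ord v2) (ltn_ord v3) s01 s12 s23 c03.
  case/andP => c02 c13; rewrite !Ead; apply/andP; split; apply: (adjc_adjn (N:=N) (X:=X)) => //.
Qed.
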